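(* Let $(R,\mathfrak{m})$ satisfy condition $\bigstar$, and let $S\subseteq R$ be a subring with $S\neq R$. Then $S+\mathfrak{m}^2\neq R$. In particular, if $S$ is a maximal element of the set of proper subrings of $R$ having the same residue field as $R$, then $\mathfrak{m}^2\subseteq S$.
   Context: All rings are commutative and unital. Condition $\bigstar$ on a ring $(R,\mathfrak{m})$: $R$ is a local ring (unique maximal ideal $\mathfrak{m}$, not necessarily Noetherian) of characteristic $p^N$ for a prime $p$ and some $N\ge 1$, with finite residue field $R/\mathfrak{m}\cong\mathbb{F}_q$, and $\mathfrak{m}$ is a nilpotent ideal. Any subring $S$ of $R$ is local with maximal ideal $\mathfrak{m}_S=\mathfrak{m}\cap S$, and its residue field $S/\mathfrak{m}_S$ is naturally a subfield of $R/\mathfrak{m}$; ''same residue field as $R$'' means $S/\mathfrak{m}_S=R/\mathfrak{m}$ under this identification. *)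

(* Defs.v *)
(* Subsets of a ring are represented as Prop-valued predicates
   R -> Prop (membership in m^2 etc. is not decidable in general). *)
From HB Require Import structures.
From mathcomp Require Import all_boot all_order all_algebra.
Set Implicit Arguments. Unset Strict Implicit. Unset Printing Implicit Defensive.
Import GRing.Theory.
Local Open Scope ring_scope.

Section Defs.
Variable R : comNzRingType.

Definition is_ideal17 (I : R -> Prop) : Prop :=
  I 0 /\ (forall x y, I x -> I y -> I (x + y)) /\ (forall r x, I x -> I (r * x)).

Definition is_subring17 (S : R -> Prop) : Prop :=
  S 1 /\ (forall x y, S x -> S y -> S (x - y)) /\ (forall x y, S x -> S y -> S (x * y)).

Definition local_with_max (m : R -> Prop) : Prop :=
  is_ideal17 m /\ ~ m 1 /\
  (forall I : R -> Prop, is_ideal17 I -> ~ I 1 -> forall x, I x -> m x).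

Definition prodset (m : R -> Prop) (k : nat) (y : R) : Prop :=
  exists f : 'I_k -> R, (forall i, m (f i)) /\ y = \prod_(i < k) f i.

Definition idealpow (m : R -> Prop) (k : nat) (x : R) : Prop :=
  exists s : seq R, (forall y, y \in s -> prodset m k y) /\ x = \sum_(y <- s) y.

Definition nilpotent_ideal (m : R -> Prop) : Prop :=
  exists k : nat, forall x, idealpow m k x -> x = 0.

Definition has_char (n : nat) : Prop :=
  (n%:R : R) = 0 /\ forall k : nat, (k%:R : R) = 0 -> (n %| k)%N.

Definition finite_residue (m : R -> Prop) : Prop :=
  exists s : seq R, forall x : R, exists2 y, y \in s & m (x - y).

Definition star (m : R -> Prop) : Prop :=
  local_with_max m /\
  (exists p N : nat, prime p /\ (0 < N)%N /\ has_char (p ^ N)) /\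
  finite_residue m /\ nilpotent_ideal m.

(* S has the same residue field as R: S/(m ∩ S) -> R/m is onto *)
Definition same_residue (m S : R -> Prop) : Prop :=
  forall x : R, exists2 s, S s & m (x - s).

Definition not_whole (S : R -> Prop) : Prop := exists x, ~ S x.

End Defs.

(* Main.v *)
Require Import Defs.
From mathcomp Require Import all_boot all_order all_algebra.
From Stdlib Require Import Classical.
Set Implicit Arguments. Unset Strict Implicit.
Import GRing.Theory.
Local Open Scope ring_scope.

Section Aux.
Variable R : comNzRingType.
Variable m : R -> Prop.
Hypothesis mI : is_ideal17 m.

Inductive Pw : nat -> R -> Prop :=
| Pw_base x : Pw 0 x
| Pw_zero n : Pw n 0
| Pw_add n x y : Pw n x -> Pw n y -> Pw n (x + y)
| Pw_mul n a b : m a -> Pw n b -> Pw n.+1 (a * b).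

Lemma Pw_mono n x : Pw n x -> forall k, (k <= n)%N -> Pw k x.
Proof.
elim=> {n x}.
- move=> x k; rewrite leqn0 => /eqP ->; constructor.
- move=> *; constructor.
- move=> n x y _ IH1 _ IH2 k hk; constructor; [exact: IH1|exact: IH2].
- move=> n a b ma _ IH [|k] hk; first constructor.
  constructor => //; exact: IH.
Qed.

Lemma Pw_ideal n x r : Pw n x -> Pw n (r * x).
Proof.
move=> H; elim: H r => {n x}.
- move=> *; constructor.
- move=> n r; rewrite mulr0; constructor.
- move=> n x y _ IH1 _ IH2 r; rewrite mulrDr; constructor; [exact: IH1|exact: IH2].
- move=> n a b ma _ IH r; rewrite mulrCA; constructor => //; exact: IH.
Qed.

Lemma Pw_sub n x y : Pw n x -> Pw n y -> Pw n (x - y).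
Proof.
move=> hx hy; constructor => //; rewrite -mulN1r; exact: Pw_ideal.
Qed.

Lemma Pw_prod n x k y : Pw n x -> Pw k y -> Pw (n + k) (x * y).
Proof.
move=> H; elim: H y => {n x}.
- move=> x y hy; rewrite add0n; exact: Pw_ideal.
- move=> n y _; rewrite mul0r; constructor.
- move=> n x x' _ IH1 _ IH2 y hy; rewrite mulrDl; constructor; [exact: IH1|exact: IH2].
- move=> n a b ma _ IH y hy; rewrite addSn -mulrA; constructor => //; exact: IH.
Qed.

Lemma Pw_m n x : Pw n x -> (1 <= n)%N -> m x.
Proof.
case: mI => m0 [mD mM].
elim=> {n x} //.
- move=> n x y _ IH1 _ IH2 h; apply: mD; [exact: IH1|exact: IH2].
- move=> n a b ma _ _ _; rewrite mulrC; exact: mM.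
Qed.

Lemma prodset_Pw n y : prodset m n y -> Pw n y.
Proof.
elim: n y => [|n IH] y [f [hf ->]]; first constructor.
rewrite big_ord_recl; constructor => //; apply: IH.
by exists (fun i => f (lift ord0 i)).
Qed.

Lemma idealpow_Pw n y : idealpow m n y -> Pw n y.
Proof.
move=> [s [hs ->]]; elim: s hs => [|a s IH] hs; first by rewrite big_nil; constructor.
rewrite big_cons; constructor.
  by apply: prodset_Pw; apply: hs; rewrite inE eqxx.
by apply: IH => z hz; apply: hs; rewrite inE hz orbT.
Qed.

Lemma prodset_mul n a y : m a -> prodset m n y -> prodset m n.+1 (a * y).
Proof.
move=> ma [f [hf ->]].
exists (fun i : 'I_n.+1 => if unlift ord0 i is Some j then f j else a); split.
  by move=> i; case: (unlift ord0 i).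
by rewrite big_ord_recl unlift_none; congr (_ * _); apply: eq_bigr => i _; rewrite liftK.
Qed.

Lemma Pw_idealpow n x : Pw n x -> n = 0%N \/ idealpow m n x.
Proof.
case: mI => m0 [mD mM].
elim=> {n x}.
- by left.
- by move=> n; right; exists [::]; split => //; rewrite big_nil.
- move=> n x y _ [->|[s1 [h1 ->]]]; first by left.
  move=> _ [->|[s2 [h2 ->]]]; first by left.
  right; exists (s1 ++ s2); split; last by rewrite big_cat.
  by move=> z; rewrite mem_cat => /orP [] ?; [apply: h1|apply: h2].
- move=> n a b ma _ [->|[s [hs ->]]]; right.
    exists [:: a * b]; split; last by rewrite big_seq1.
    move=> z; rewrite inE => /eqP ->; exists (fun _ => a * b); split.
      by move=> _; rewrite mulrC; apply: mM.
    by rewrite big_ord1.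
  exists (map (fun y => a * y) s); split; last by rewrite big_map big_distrr.
  move=> z /mapP [y hy ->]; apply: prodset_mul => //; exact: hs.
Qed.

Lemma nil_Pw : nilpotent_ideal m -> exists k, forall x, Pw k x -> x = 0.
Proof.
move=> [k hk]; exists k => x hx.
case: (Pw_idealpow hx) => [k0|]; last exact: hk.
have : (1 : R) = 0.
  apply: hk; exists [:: 1]; split; last by rewrite big_seq1.
  move=> z; rewrite inE => /eqP ->; exists (fun _ => 0); split; last by rewrite k0 big_ord0.
  by move=> [i hi]; move: hi; rewrite k0.
by move/eqP; rewrite oner_eq0.
Qed.

Section Sub.
Variable S : R -> Prop.
Hypothesis Ssub : is_subring17 S.

Lemma S0 : S 0.
Proof. case: Ssub => h1 [hB _]; rewrite -(subrr 1); exact: hB. Qed.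

Lemma SD x y : S x -> S y -> S (x + y).
Proof.
case: Ssub => h1 [hB _] hx hy.
have -> : x + y = x - (0 - y) by rewrite sub0r opprK.
apply: (hB) => //; apply: (hB) => //; exact: S0.
Qed.

Hypothesis H2 : forall x, exists s y, S s /\ Pw 2 y /\ x = s + y.

Lemma decomp n b : Pw n b -> exists t w, S t /\ Pw n t /\ Pw n.+1 w /\ b = t + w.
Proof.
case: Ssub => S1 [SB SM].
elim=> {n b}.
- move=> x; have [s [y [hs [hy ->]]]] := H2 x.
  exists s, y; do !split => //; first constructor.
  exact: (Pw_mono hy).
- move=> n; exists 0, 0; do !split; try constructor; first exact: S0.
  by rewrite addr0.
- move=> n x y _ [t1 [w1 [ht1 [pt1 [pw1 ->]]]]] _ [t2 [w2 [ht2 [pt2 [pw2 ->]]]]].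
  exists (t1 + t2), (w1 + w2); do !split; try constructor => //.
    exact: SD.
  by rewrite addrACA.
- move=> n a b ma _ [t [w [ht [pt [pw ->]]]]].
  have [s [z [hs [hz ea]]]] := H2 a.
  have msa : m s.
    have -> : s = a - z by rewrite ea addrK.
    case: mI => m0 [mD mM]; apply: mD => //.
    rewrite -mulN1r; apply: mM; apply: (Pw_m hz) => //.
  exists (s * t), (s * w + z * t + z * w); do !split.
  + exact: SM.
  + by constructor.
  + constructor; first constructor.
    * by constructor.
    * by apply: (Pw_prod hz pt).
    * have := Pw_prod hz pw; rewrite add2n => h; apply: (Pw_mono h); exact: leqnSn.
  + by rewrite ea !mulrDl !mulrDr !addrA.
Qed.

Lemma allS : nilpotent_ideal m -> forall x, S x.
Proof.
move=> /nil_Pw [k hk] x.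
have : forall j, exists s w, S s /\ Pw j w /\ x = s + w.
  elim=> [|j [s [w [hs [hw ->]]]]].
    exists 0, x; do !split; first exact: S0; first constructor.
    by rewrite add0r.
  have [t [w' [ht [_ [hw' ->]]]]] := decomp hw.
  exists (s + t), w'; do !split => //; first exact: SD.
  by rewrite addrA.
move=> /(_ k) [s [w [hs [hw ->]]]]; by rewrite (hk _ hw) addr0.
Qed.
End Sub.
End Aux.

Theorem theorem17 (R : comNzRingType) (m : R -> Prop) (Hstar : star m) :
  (forall S : R -> Prop, is_subring17 S -> not_whole S ->
     exists x : R, ~ (exists s y, S s /\ idealpow m 2 y /\ x = s + y))
  /\
  (forall S : R -> Prop,
     (is_subring17 S /\ not_whole S /\ same_residue m S /\
      (forall T : R -> Prop, is_subring17 T -> not_whole T -> same_residue m T ->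
         (forall x, S x -> T x) -> forall x, T x -> S x)) ->
     forall x, idealpow m 2 x -> S x).
Proof.
case: Hstar => [[mI _] [_ [_ nilm]]].
have part1 : forall S : R -> Prop, is_subring17 S -> not_whole S ->
     exists x : R, ~ (exists s y, S s /\ Pw m 2 y /\ x = s + y).
  move=> S Ssub [x0 nx0].
  apply: NNPP => hn; apply: nx0; apply: (allS mI Ssub) => // x.
  by apply: NNPP => h; apply: hn; exists x.
split.
  move=> S Ssub nw; have [x hx] := part1 S Ssub nw; exists x => - [s [y [hs [hy e]]]].
  by apply: hx; exists s, y; do !split => //; apply: idealpow_Pw.
move=> S [Ssub [nw [sr mx]]] x hx.
pose T := fun x => exists s y, S s /\ Pw m 2 y /\ x = s + y.
have STs : forall s, S s -> T s by move=> s hs; exists s, 0; do !split => //; [constructor|rewrite addr0].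
case: Ssub => S1 [SB SM].
have Tsub : is_subring17 T.
  split; first exact: STs.
  split.
    move=> _ _ [s1 [y1 [h1 [p1 ->]]]] [s2 [y2 [h2 [p2 ->]]]].
    exists (s1 - s2), (y1 - y2); do !split; [exact: SB|exact: Pw_sub|].
    by rewrite opprD addrACA.
  move=> _ _ [s1 [y1 [h1 [p1 ->]]]] [s2 [y2 [h2 [p2 ->]]]].
  exists (s1 * s2), (s1 * y2 + y1 * s2 + y1 * y2); do !split; first exact: SM.
    constructor; first constructor; rewrite ?(mulrC y1); exact: Pw_ideal.
  by rewrite mulrDl !mulrDr !addrA.
have Tnw : not_whole T.
  have [x0 nx0] := part1 S (conj S1 (conj SB SM)) nw; by exists x0.
apply: (mx T Tsub Tnw).
- move=> z; have [s hs hm] := sr z; exists s => //; exact: STs.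
- exact: STs.
- exists 0, x; do !split; [|exact: idealpow_Pw|by rewrite add0r].
  by rewrite -(subrr 1); apply: SB.
Qed.
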